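(* Let $N\ge 2$. Consider the encoding of basis states $|k_1,k_2,\dots\rangle$, $k_i\in\mathbb Z_N$, with the convention $k_m=0$ for $m\le 0$: $$|k_1,k_2,\dots\rangle\longmapsto\bigotimes_{i=1}^{+\infty}|k_i+k_{i-2},\;k_i+k_{i-1}+k_{i-2}\rangle,$$ where all additions are modulo $N$ (so input $k_i$ contributes to output registers $2i-1$ and $2i$). Then this quantum convolutional code corrects up to one spin flip error for every four consecutive quantum registers, i.e. it corrects the error set consisting of all operators $\bigotimes_{r\ge1}X_r^{a_r}$ ($a_r\in\mathbb Z_N$) such that among any four consecutive output registers at most one has $a_r\neq 0$.
   Context: Each register is an $N$-state system with orthonormal basis $|j\rangle$, $j\in\mathbb Z_N$; $X_r$ denotes the spin flip $|j\rangle\mapsto|j+1\bmod N\rangle$ on output register $r$. An encoding $|\mathbf k\rangle\mapsto|\mathbf k_{\rm encode}\rangle$ corrects an error set $E$ if for all $\mathcal A,\mathcal B\in E$ and all input labels $\mathbf k,\mathbf k'$: $\langle\mathbf k'_{\rm encode}|\mathcal A^\dagger\mathcal B|\mathbf k_{\rm encode}\rangle=\Lambda_{\mathcal A,\mathcal B}\delta_{\mathbf k\mathbf k'}$ with $\Lambda_{\mathcal A,\mathcal B}\in\mathbb C$ independent of $\mathbf k,\mathbf k'$. *)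

(* Defs.v *)
From mathcomp Require Import all_boot all_algebra all_field.
From Stdlib Require Import ClassicalEpsilon.
Set Implicit Arguments. Unset Strict Implicit. Unset Printing Implicit Defensive.
Import GRing.Theory.
Local Open Scope ring_scope.

(* A (basis) label of an infinite chain of N-state registers:
   register r (0-based, r : nat) holds s r : 'Z_N.  Use only with 1 < N. *)
Definition label (N : nat) := nat -> 'Z_N.

Definition braket (N : nat) (s t : label N) : algC :=
  if excluded_middle_informative (s = t) then 1 else 0.

(* Spin-flip error  \bigotimes_r X_r^{a_r}  acting on a basis state:
   |s> |-> |s + a> (registerwise, mod N). *)
Definition Xop (N : nat) (a : label N) (s : label N) : label N :=
  fun r => s r + a r.

(* An encoding (on basis labels) corrects the error set E:
   for all A, B in E and all labels k, k',
   <k'_enc| A^dagger B |k_enc> = Lambda_{A,B} delta_{k k'},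
   where <k'_enc|A^dagger B|k_enc> = <A k'_enc | B k_enc>. *)
Definition corrects (N : nat) (enc : label N -> label N) (E : label N -> Prop) :=
  forall a b : label N, E a -> E b ->
    exists Lambda : algC, forall k k' : label N,
      braket (Xop a (enc k')) (Xop b (enc k)) = Lambda * braket k' k.

(* k_{i-j} with the convention k_m = 0 for m <= 0 (0-based: input i is k_{i+1}). *)
Definition kback (N : nat) (k : label N) (j i : nat) : 'Z_N :=
  if (j <= i)%N then k (i - j)%N else 0.

(* The encoding: input k_{i+1} (0-based index i) feeds output registers 2i, 2i+1:
   out(2i)   = k_i + k_{i-2},
   out(2i+1) = k_i + k_{i-1} + k_{i-2}. *)
Definition conv_enc (N : nat) (k : label N) : label N :=
  fun r => if ~~ odd r then k r./2 + kback k 2 r./2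
           else k r./2 + kback k 1 r./2 + kback k 2 r./2.

Definition one_flip_per_four (N : nat) (a : label N) : Prop :=
  forall r i j : nat, (r <= i)%N -> (i < j)%N -> (j <= r + 3)%N ->
    a i = 0 \/ a j = 0.

(* Main.v *)
Require Import Defs.
From mathcomp Require Import all_boot all_algebra all_field.
From mathcomp Require Import ring zify.
From Stdlib Require Import Classical ClassicalEpsilon FunctionalExtensionality.
Import GRing.Theory.
Local Open Scope ring_scope.

Lemma enc_even N (k : label N) i : conv_enc k i.*2 = k i + kback k 2 i.
Proof. by rewrite /conv_enc odd_double /= doubleK. Qed.

Lemma enc_odd N (k : label N) i :
  conv_enc k i.*2.+1 = k i + kback k 1 i + kback k 2 i.
Proof. by rewrite /conv_enc /= odd_double /= uphalf_double. Qed.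

Lemma key (R : zmodType) (a0 a1 a2 a3 b0 b1 b2 b3 x y : R) :
  x != 0 -> b0 - a0 = x -> b1 - a1 = x -> b2 - a2 = y -> b3 - a3 = y + x ->
  (a0 = 0 \/ a1 = 0) -> (a0 = 0 \/ a2 = 0) -> (a0 = 0 \/ a3 = 0) ->
  (a1 = 0 \/ a2 = 0) -> (a1 = 0 \/ a3 = 0) ->
  (b0 = 0 \/ b1 = 0) -> (b0 = 0 \/ b2 = 0) -> (b0 = 0 \/ b3 = 0) ->
  (b1 = 0 \/ b2 = 0) -> (b1 = 0 \/ b3 = 0) -> False.
Proof.
move=> /eqP xn0 E0 E1 E2 E3 A01 A02 A03 A12 A13 B01 B02 B03 B12 B13.
have a0b0 : a0 <> 0 \/ b0 <> 0.
  case: (classic (a0 = 0)) => [h|]; last by left.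
  by right => hb; apply: xn0; rewrite -E0 h hb subrr.
have [a2z a3z] : a2 = 0 /\ a3 = 0.
  case: a0b0 => h.
  - by split; [case: A02 | case: A03].
  - have b1z : b1 = 0 by case: B01.
    have a1n : a1 <> 0 by move=> h1; apply: xn0; rewrite -E1 b1z h1 subrr.
    by split; [case: A12 | case: A13].
have [b2z b3z] : b2 = 0 /\ b3 = 0.
  case: a0b0 => h.
  - have a1z : a1 = 0 by case: A01.
    have b1n : b1 <> 0 by move=> h1; apply: xn0; rewrite -E1 a1z h1 subrr.
    by split; [case: B12 | case: B13].
  - by split; [case: B02 | case: B03].
apply: xn0.
have yz : y = 0 by rewrite -E2 a2z b2z subrr.
by move: E3; rewrite a3z b3z subrr yz add0r.
Qed.

Lemma main N (a b k k' : label N) :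
  one_flip_per_four a -> one_flip_per_four b ->
  (forall r, conv_enc k' r + a r = conv_enc k r + b r) -> k' = k.
Proof.
move=> Ha Hb H.
apply: NNPP => hne.
have ex : exists i, k' i != k i.
  apply: NNPP => hn; apply: hne; apply: functional_extensionality => i.
  by apply/eqP; apply: NNPP => h; apply: hn; exists i; apply/negP.
case: (ex_minnP ex) => i hi hmin.
have hlt : forall m, (m < i)%N -> k' m = k m.
  move=> m hm.
  apply/eqP; apply: NNPP => /negP h.
  by move: (hmin m h); rewrite leqNgt hm.
have kb : forall j l, (l < i + j)%N -> kback k' j l = kback k j l.
  move=> j l hl; rewrite /kback; case: ifP => // hjl.
  apply: hlt; lia.
have kb1 : forall (kk : label N) l, kback kk 1 l.+1 = kk l.
  by move=> kk l; rewrite /kback /= subn1.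
have e r : b r - a r = conv_enc k' r - conv_enc k r.
  rewrite -[b r](addKr (conv_enc k r)) -H; ring.
have W (c : label N) : one_flip_per_four c -> forall u v, (u < v <= 3)%N ->
    c (i.*2 + u)%N = 0 \/ c (i.*2 + v)%N = 0.
  move=> Hc u v /andP [h1 h2]; apply: (Hc i.*2) => //; lia.
apply: (@key _ (a (i.*2 + 0)%N) (a (i.*2 + 1)%N) (a (i.*2 + 2)%N) (a (i.*2 + 3)%N)
   (b (i.*2 + 0)%N) (b (i.*2 + 1)%N) (b (i.*2 + 2)%N) (b (i.*2 + 3)%N)
   (k' i - k i) (k' i.+1 - k i.+1)); try by apply: W.
- by rewrite subr_eq0.
- rewrite e addn0 !enc_even (kb 2%N i); [ring | lia].
- rewrite e addn1 !enc_odd (kb 2%N i) ?(kb 1%N i); [ring | lia | lia].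
- rewrite e (_ : (i.*2 + 2 = (i.+1).*2)%N); last lia; rewrite !enc_even (kb 2%N i.+1); [ring | lia].
- rewrite e (_ : (i.*2 + 3 = (i.+1).*2.+1)%N); last lia; rewrite !enc_odd !kb1 (kb 2%N i.+1); [ring | lia].
Qed.

Theorem lemma3 (N : nat) (hN : (1 < N)%N) :
  corrects (@conv_enc N) (@one_flip_per_four N).
Proof.
move=> a b Ha Hb; exists (braket a b) => k k'.
rewrite /braket.
case: (excluded_middle_informative _) => [E|E];
case: (excluded_middle_informative (k' = k)) => [Ek|Ek].
- subst k'.
  case: (excluded_middle_informative (a = b)) => [hab|hab].
    by rewrite mulr1.
  exfalso; apply: hab; apply: functional_extensionality => r.
  have h := f_equal (fun f => f r) E; rewrite /Xop /= in h.
  exact: (addrI _ h).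
- exfalso; apply: Ek; apply: (@main N a b k k' Ha Hb) => r.
  have h := f_equal (fun f => f r) E; rewrite /Xop /= in h.
  exact: h.
- subst k'.
  case: (excluded_middle_informative (a = b)) => [hab|hab].
    by exfalso; apply: E; rewrite hab.
  by rewrite mulr1.
- by rewrite mulr0.
Qed.
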